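(* In the hierarchical partition construction described in the context, every set $S^*\in\mathcal S_j$ (for $j\ge1$) has at most $\lambda^{3+\eta}$ children, i.e. at most $\lambda^{3+\eta}$ sets $S\in\mathcal S_{j-1}$ satisfy $S\subseteq S^*$.
   Context: Let $(V,d)$ be a finite metric space with $|V|\ge 2$ which is doubling with constant $\lambda$: for every $v\in V$ and $r>0$ the open ball $B_{2r}(v)=\{u:d(u,v)<2r\}$ is contained in the union of at most $\lambda$ open balls $B_r(w)$, $w\in V$. Fix an integer $\eta\ge2$ and a real $\tau$ with $1+\frac{1}{2^{\eta-1}-1}\le\tau\le 2^{\eta}$. For $L\subseteq V$ and $r>0$, a greedy partition of $L$ with parameter $r$ is obtained by: set $L_0=L$; while $L_i\ne\emptyset$ choose any $v_i\in L_i$, let $P_i=\{u\in L_i: d(u,v_i)<2^{-\eta-1}r\}$ with leader $v_i$, and set $L_{i+1}=L_i\setminus P_i$. Hierarchical partition construction: choose $r_0$ with $0<r_0<\min_{u\ne v}d(u,v)$ and put $r_j=\tau^j r_0$. Let $\mathcal S_0=\{\{v\}:v\in V\}$, the leader of $\{v\}$ being $v$. While $\mathcal S_j$ has more than one element: let $L_j$ be the set of leaders of the sets in $\mathcal S_j$, let $\mathcal S'_{j+1}$ be a greedy partition of $L_j$ with parameter $2r_{j+1}$, and let $\mathcal S_{j+1}$ consist, for each $P\in\mathcal S'_{j+1}$, of the set $\bigcup\{S\in\mathcal S_j:\mathrm{leader}(S)\in P\}$, whose leader is defined to be the leader of $P$. Each $\mathcal S_j$ is a partition of $V$; $S\in\mathcal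 S_{j-1}$ is a child of $S^*\in\mathcal S_{j}$ if $S\subseteq S^*$. *)

(* Defs.v *)
From HB Require Import structures.
From mathcomp Require Import all_boot all_order all_algebra.
Set Implicit Arguments. Unset Strict Implicit. Unset Printing Implicit Defensive.
Import Order.TTheory GRing.Theory Num.Theory.
Local Open Scope ring_scope.

Section Defs.
Variables (T : finType) (R : realFieldType) (d : T -> T -> R) (eta : nat).

Definition is_metric : Prop :=
  [/\ forall u v, 0 <= d u v,
      forall u v, (d u v = 0) <-> (u = v),
      forall u v, d u v = d v u
    & forall u v w, d u w <= d u v + d v w].

Definition doubling (lambda : nat) : Prop :=
  forall (v : T) (r : R), 0 < r ->
    exists W : seq T, (size W <= lambda)%N /\
      forall u, d u v < 2 * r -> exists2 w, w \in W & d u w < r.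

Definition gpart (L : {set T}) (r : R) (v : T) : {set T} :=
  [set u in L | d u v < r / 2 ^+ eta.+1].

(* greedy r L G : G is a greedy partition of L with parameter r, given as the
   list of (part, leader) pairs in the order they are produced *)
Inductive greedy (r : R) : {set T} -> seq ({set T} * T) -> Prop :=
| greedy_nil : greedy r set0 [::]
| greedy_cons (L : {set T}) (v : T) rest :
    v \in L -> greedy r (L :\: gpart L r v) rest ->
    greedy r L ((gpart L r v, v) :: rest).

(* a level of the hierarchy: list of (set, leader) pairs *)
Definition leaders (S : seq ({set T} * T)) : {set T} := [set x.2 | x in S].

Definition level0 : seq ({set T} * T) := [seq ([set v], v) | v <- enum T].

(* one step of the hierarchical construction with radius rj1 = r_{j+1} *)
Definition hier_step (rj1 : R) (Sj Sj1 : seq ({set T} * T)) : Prop :=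
  exists G, greedy (2 * rj1) (leaders Sj) G /\
    Sj1 = [seq (\bigcup_(x <- Sj | x.2 \in pv.1) (x.1 : {set T}), pv.2) | pv : {set T} * T <- G].

Definition children (Sprev : seq ({set T} * T)) (Sstar : {set T}) : {set {set T}} :=
  [set S in [seq x.1 | x : {set T} * T <- Sprev] | S \subset Sstar].

End Defs.

(* Main.v *)
Require Import Defs.
From HB Require Import structures.
From mathcomp Require Import all_boot all_order all_algebra.
Import Order.TTheory GRing.Theory Num.Theory.
Local Open Scope ring_scope.
Set Implicit Arguments. Unset Strict Implicit.

Lemma bigcup_seq_memP (T I : finType) (s : seq I) (P : pred I) (F : I -> {set T}) u :
  reflect (exists2 x, (x \in s) && P x & u \in F x) (u \in \bigcup_(x <- s | P x) F x).
Proof.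
elim: s => [|a s IH].
  by rewrite big_nil inE; constructor => -[x]; rewrite in_nil.
rewrite big_cons; case Pa: (P a).
  rewrite in_setU; apply: (iffP orP).
    case=> [h|/IH [x /andP[xs Px] h]]; first by exists a; rewrite ?inE ?eqxx ?Pa.
    by exists x => //; rewrite inE xs orbT.
  move=> [x /andP[]]; rewrite inE => /orP[/eqP ->|xs] Px h; first by left.
  by right; apply/IH; exists x; rewrite ?xs.
apply: (iffP IH).
  by move=> [x /andP[xs Px] h]; exists x; rewrite ?inE ?xs ?orbT.
move=> [x /andP[]]; rewrite inE => /orP[/eqP ->|xs] Px h; first by rewrite Pa in Px.
by exists x; rewrite ?xs.
Qed.

Lemma greedy_props (T : finType) (R : realFieldType) (d : T -> T -> R) (eta : nat) r L G :
  is_metric d -> 0 < r -> greedy d eta r L G ->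
  [/\ (forall pv, pv \in G -> [/\ pv.2 \in pv.1, pv.1 \subset L & exists L', pv.1 = gpart d eta L' r pv.2]),
      (forall pv qv u, pv \in G -> qv \in G -> u \in pv.1 -> u \in qv.1 -> pv = qv) &
      (forall pv qv, pv \in G -> qv \in G -> pv.2 != qv.2 -> r / 2 ^+ eta.+1 <= d pv.2 qv.2)].
Proof.
move=> [d0 d00 dsym dtri] r0 G'.
have rp : 0 < r / 2 ^+ eta.+1 by rewrite divr_gt0 // exprn_gt0.
elim: G' => [|L' v rest vL _ [IH1 IH2 IH3]].
  by split=> // pv; rewrite in_nil.
have inhead u : u \in gpart d eta L' r v -> u \in L' by rewrite inE => /andP[].
have restsub pv u : pv \in rest -> u \in pv.1 -> u \in L' :\: gpart d eta L' r v.
  by move=> /IH1 [_ /subsetP s _] /s.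
have sep w : w \in L' :\: gpart d eta L' r v -> r / 2 ^+ eta.+1 <= d w v.
  rewrite !inE => /andP[h1 h2]; move: h1; rewrite h2 /= leNgt; done.
split.
- move=> pv; rewrite inE => /orP[/eqP -> /=|/IH1 [a b c]]; last first.
    by split=> //; apply: subset_trans b (subsetDl _ _).
  split; last by exists L'.
  + by rewrite inE vL /= (proj2 (d00 v v) erefl) rp.
  + by apply/subsetP=> u /inhead.
- move=> pv qv u; rewrite !inE => /orP[/eqP ->|pr] /orP[/eqP ->|qr] hp hq //.
  + by move: (restsub _ _ qr hq); rewrite inE hp.
  + by move: (restsub _ _ pr hp); rewrite inE hq.
  + exact: IH2 pr qr hp hq.
- move=> pv qv; rewrite !inE => /orP[/eqP ->|pr] /orP[/eqP ->|qr] //=.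
  + by rewrite eqxx.
  + move=> _; rewrite [X in _ <= X]dsym; apply: sep; case: (IH1 _ qr) => h _ _.
    exact: (restsub _ _ qr h).
  + move=> _; apply: sep; case: (IH1 _ pr) => h _ _.
    exact: (restsub _ _ pr h).
  + exact: IH3 pr qr.
Qed.

Definition Inv (T : finType) (R : realFieldType) (d : T -> T -> R)
   (Si : seq ({set T} * T)) (s : R) : Prop :=
  [/\ forall x, x \in Si -> x.2 \in x.1,
      forall x y u, x \in Si -> y \in Si -> u \in x.1 -> u \in y.1 -> x.2 = y.2,
      forall x y, x \in Si -> y \in Si -> x.2 = y.2 -> x.1 = y.1 &
      forall x y, x \in Si -> y \in Si -> x.2 != y.2 -> s <= d x.2 y.2].

Lemma Inv_step (T : finType) (R : realFieldType) (d : T -> T -> R) (eta : nat) r Si Si1 s :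
  is_metric d -> 0 < r -> Inv d Si s -> hier_step d eta r Si Si1 ->
  Inv d Si1 (2 * r / 2 ^+ eta.+1).
Proof.
move=> dm rp [D C B A] [G [gG ->]].
have r2p : 0 < 2 * r by rewrite mulr_gt0.
have [g1 g2 g3] := greedy_props dm r2p gG.
split.
- move=> z /mapP [pv pG ->] /=.
  have [h1 /subsetP h2 _] := g1 _ pG.
  have /imsetP [x xS ex] := h2 _ h1.
  apply/bigcup_seq_memP; exists x; first by rewrite xS -ex h1.
  by rewrite ex; apply: D.
- move=> z z' u /mapP [pv pG ->] /mapP [qv qG ->] /=.
  move=> /bigcup_seq_memP [x /andP[xS xp] ux] /bigcup_seq_memP [y /andP[yS yq] uy].
  have exy := C _ _ _ xS yS ux uy.
  by rewrite (g2 _ _ _ pG qG xp); last by rewrite exy.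
- move=> z z' /mapP [pv pG ->] /mapP [qv qG ->] /= e.
  have [h1 _ _] := g1 _ pG; have [h1' _ _] := g1 _ qG.
  by rewrite (g2 _ _ _ pG qG h1) // e.
- move=> z z' /mapP [pv pG ->] /mapP [qv qG ->] /= ne.
  exact: g3.
Qed.

Lemma Inv_le (T : finType) (R : realFieldType) (d : T -> T -> R) Si s s' :
  s' <= s -> Inv d Si s -> Inv d Si s'.
Proof.
move=> le [D C B A]; split=> // x y xS yS ne.
exact: le_trans le (A _ _ xS yS ne).
Qed.

Lemma Inv0 (T : finType) (R : realFieldType) (d : T -> T -> R) r0 :
  (forall u v : T, u != v -> r0 < d u v) -> Inv d (level0 T) r0.
Proof.
move=> sep; split.
- by move=> x /mapP [v _ ->] /=; rewrite set11.
- move=> x y u /mapP [v _ ->] /mapP [w _ ->] /=.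
  by rewrite !inE => /eqP -> /eqP.
- by move=> x y /mapP [v _ ->] /mapP [w _ ->] /= ->.
- move=> x y /mapP [v _ ->] /mapP [w _ ->] /= ne.
  exact: ltW (sep _ _ ne).
Qed.

Lemma ball_card (T : finType) (R : realFieldType) (d : T -> T -> R) (lam : nat) (s : R) :
  is_metric d -> doubling d lam -> forall k (v : T) (rho : R) (P : {set T}),
  0 < rho -> (forall u, u \in P -> d u v < rho) ->
  (forall u w, u \in P -> w \in P -> u != w -> s <= d u w) ->
  2 * rho <= s * 2 ^+ k -> (#|P| <= lam ^ k)%N.
Proof.
move=> [d0 d00 dsym dtri] dbl k; elim: k => [|k IH] v rho P rp inb sep hk.
  rewrite expn0; apply/card_le1_eqP => u w uP wP.
  apply/eqP; apply: contraT => ne.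
  rewrite expr0 mulr1 in hk; have := sep _ _ wP uP ne; rewrite dsym => h.
  have : d u w < 2 * rho.
    apply: le_lt_trans (dtri u v w) _.
    rewrite mulrDl mul1r; apply: ltrD; first exact: inb. by rewrite dsym; apply: inb.
  by rewrite ltNge (le_trans hk h).
have h2 : (2 : R) != 0 by rewrite pnatr_eq0.
have er : 2 * (rho / 2) = rho by rewrite mulrC divfK.
have rp2 : 0 < rho / 2 by rewrite divr_gt0.
have [W [sW covW]] := dbl v (rho / 2) rp2.
have hk' : 2 * (rho / 2) <= s * 2 ^+ k.
  rewrite er; rewrite exprS mulrCA in hk.
  by rewrite -(ler_pM2l (ltr0Sn _ 1)).
suff gen : forall (W : seq T) (Q : {set T}), Q \subset P ->
   (forall u, u \in Q -> exists2 w, w \in W & d u w < rho / 2) ->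
   (#|Q| <= size W * lam ^ k)%N.
  apply: leq_trans (gen W P (subxx _) _) _.
    by move=> u uP; apply: covW; rewrite er inb.
  by rewrite expnS leq_mul2r sW orbT.
elim=> [|w W' IHW] Q QP cov.
  rewrite mul0n leqn0 cards_eq0; apply/eqP/setP => u; rewrite inE.
  by apply/negP => /cov [w]; rewrite in_nil.
rewrite -(cardsID [set u | d u w < rho / 2] Q) /= mulSn.
apply: leq_add.
  apply: (IH w (rho / 2)) => //.
    by move=> u /setIP [_]; rewrite inE.
  move=> u u' /setIP [uQ _] /setIP [u'Q _].
  by apply: sep; apply: (subsetP QP).
apply: IHW; first by apply: subset_trans (subsetDl _ _) QP.
move=> u /setDP [uQ]; rewrite inE => nw.
have [w' ] := cov _ uQ; rewrite inE => /orP [/eqP -> h|w'W h].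
  by rewrite h in nw.
by exists w'.
Qed.

Lemma final_bound (T : finType) (R : realFieldType) (d : T -> T -> R) (eta lam : nat)
  Sprev Snext r s (Sstar : {set T}) :
  is_metric d -> doubling d lam -> 0 < r -> Inv d Sprev s -> hier_step d eta r Sprev Snext ->
  2 * (2 * r / 2 ^+ eta.+1) <= s * 2 ^+ eta.+1 ->
  Sstar \in [seq x.1 | x <- Snext] -> (#|children Sprev Sstar| <= lam ^ eta.+1)%N.
Proof.
move=> dm dbl rp [D C B A] [G [gG eN]] hs.
rewrite eN => /mapP [z /mapP [pv pG ->] ->] /=.
have r2p : 0 < 2 * r by rewrite mulr_gt0.
have [g1 g2 g3] := greedy_props dm r2p gG.
have [vP /subsetP PL [L' PL']] := g1 _ pG.
pose f (u : T) : {set T} :=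
  if [pick x | (x \in Sprev) && (x.2 == u)] is Some x then x.1 else set0.
have sub : children Sprev (\bigcup_(x <- Sprev | x.2 \in pv.1) x.1) \subset f @: pv.1.
  apply/subsetP => S; rewrite inE => /andP [/mapP [x xS ->] /subsetP sx].
  have /sx /bigcup_seq_memP [y /andP [yS yP] xy] := D _ xS.
  have exy := C _ _ _ xS yS (D _ xS) xy.
  apply/imsetP; exists x.2; first by rewrite exy.
  rewrite /f; case: pickP => [z0 /andP [zS /eqP ez]|/(_ x)]; last by rewrite xS eqxx.
  by rewrite (B _ _ zS xS ez).
apply: leq_trans (subset_leq_card sub) _.
apply: leq_trans (leq_imset_card _ _) _.
have rhop : 0 < 2 * r / 2 ^+ eta.+1 by rewrite divr_gt0 // exprn_gt0.
apply: (ball_card dm dbl (v := pv.2) rhop) hs.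
  by move=> u; rewrite PL' inE => /andP [].
move=> u w /PL /imsetP [x xS ->] /PL /imsetP [y yS ->].
exact: A.
Qed.

Lemma half_lem (R : realFieldType) (x : R) n : 2 * x / 2 ^+ n.+1 = x / 2 ^+ n.
Proof.
have h2 : (2 : R) != 0 by rewrite pnatr_eq0.
by rewrite exprS -mulf_div divff // mul1r.
Qed.

Theorem lemma5 (T : finType) (R : realFieldType) (d : T -> T -> R)
    (lambda eta : nat) (tau r0 : R)
    (S : nat -> seq ({set T} * T)) (j : nat) :
  is_metric d ->
  (1 < #|T|)%N ->
  doubling d lambda ->
  (2 <= eta)%N ->
  1 + 1 / (2 ^+ eta.-1 - 1) <= tau -> tau <= 2 ^+ eta ->
  0 < r0 -> (forall u v : T, u != v -> r0 < d u v) ->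
  S 0%N = level0 T ->
  (forall i, (i < j)%N ->
     (1 < size (S i))%N /\ hier_step d eta (tau ^+ i.+1 * r0) (S i) (S i.+1)) ->
  (1 <= j)%N ->
  forall Sstar : {set T}, Sstar \in [seq x.1 | x <- S j] ->
    (#|children (S j.-1) Sstar| <= lambda ^ (3 + eta))%N.
Proof.
move=> dm _ dbl eta2 ht1 ht2 r0p sep0 S0 hstep j1 Sstar hS.
have q1 : (1 : R) <= 2 ^+ eta by rewrite exprn_ege1 // ler1n.
have qp : (0 : R) < 2 ^+ eta by rewrite exprn_gt0.
have t1 : 1 <= tau.
  apply: le_trans ht1; rewrite lerDl divr_ge0 // subr_ge0 exprn_ege1 //.
  by rewrite ler1n.
have tp : 0 < tau by apply: lt_le_trans t1; rewrite ltr01.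
have inv : forall i, (i <= j.-1)%N -> Inv d (S i) (tau ^+ i * r0 / 2 ^+ eta).
  elim=> [|i IH] hi.
    rewrite S0; apply: Inv_le (Inv0 sep0).
    by rewrite expr0 mul1r ler_pdivrMr // ler_peMr // ltW.
  have hij : (i < j)%N by apply: leq_trans hi _; rewrite leq_pred.
  have [_ hs] := hstep i hij.
  have := Inv_step dm _ (IH (ltnW hi)) hs.
  rewrite half_lem; apply.
  by rewrite mulr_gt0 // exprn_gt0.
case: j j1 hstep inv hS => [|k] // _ hstep inv hS.
have [_ hs] := hstep k (ltnSn k).
apply: leq_trans (final_bound (lam := lambda) dm dbl _ (inv k (leqnn k)) hs _ hS) _.
- by rewrite mulr_gt0 // exprn_gt0.
- rewrite half_lem (exprS (2:R) eta) [X in _ <= X]mulrCA divfK ?lt0r_neq0 //.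
  rewrite ler_pM2l ?ltr0Sn // ler_pdivrMr // exprS -mulrA [X in _ <= X]mulrC.
  by rewrite ler_pM2r ?mulr_gt0 ?exprn_gt0.
- case: lambda dbl => [|l] _; first by rewrite exp0n // exp0n.
  by apply: leq_pexp2l => //; rewrite -add1n leq_add2r.
Qed.
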